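(* Let $n\ge3$ and $\mathcal{A}\in\mathcal{R}_n$. Then $\operatorname{Ann}\mathcal{A}=\langle e_n\rangle$, and the automorphisms of $\mathcal{A}$ are exactly the linear maps $e_1\mapsto e_1+xe_n$, $e_i\mapsto e_i$ ($2\le i\le n$), with $x\in\mathbb{C}$.
   Context: Over $\mathbb{C}$, with basis $e_1,\dots,e_n$ and $e_ie_j=\sum_kc_{ij}^ke_k$. Condition ( * ): $c_{ij}^k=0$ whenever $k\le\max\{i,j\}$. For $n\ge3$, $\mathcal{R}_n$ is the family of algebra structures satisfying ( * ) with $e_i^2=e_{i+1}$ for $1\le i\le n-1$, $c_{21}^3=1$, $c_{1i}^{i+1}=0$ for $2\le i\le n-1$, and remaining structure constants $c_{ij}^k$ ($i\ne j$, $k>\max\{i,j\}$) arbitrary. $\operatorname{Ann}\mathcal{A}=\{a: a\mathcal{A}+\mathcal{A}a=0\}$. *)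

(* Defs.v *)
From HB Require Import structures.
From mathcomp Require Import all_boot all_order all_algebra.
From mathcomp Require Import reals Rstruct complex.
From Stdlib Require Rdefinitions.
Set Implicit Arguments. Unset Strict Implicit. Unset Printing Implicit Defensive.
Import Order.TTheory GRing.Theory Num.Theory.
Local Open Scope ring_scope.

Definition CC : Type := complex Rdefinitions.R.

(* Structure constants: c i j k = c_{ij}^k, indices 0-based ('I_n stands for {1..n}
   shifted by one). Vectors of the algebra are row vectors 'rV[CC]_n
   (coordinates in the basis e_1..e_n). *)
Definition strconst (n : nat) := 'I_n -> 'I_n -> 'I_n -> CC.

Definition ev (n k : nat) : 'rV[CC]_n := \row_(j < n) ((j == k :> nat)%:R).

Definition amul (n : nat) (c : strconst n) (u v : 'rV[CC]_n) : 'rV[CC]_n :=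
  \row_(k < n) \sum_(i < n) \sum_(j < n) u 0 i * v 0 j * c i j k.

Definition in_Rn (n : nat) (c : strconst n) : Prop :=
  (* condition ( * ): c_{ij}^k = 0 whenever k <= max(i,j) *)
  (forall i j k : 'I_n, (k <= maxn i j)%N -> c i j k = 0) /\
  (* e_i^2 = e_{i+1} for 1 <= i <= n-1 *)
  (forall i k : 'I_n, (i.+1 < n)%N -> c i i k = (k == i.+1 :> nat)%:R) /\
  (* c_{21}^3 = 1 *)
  (forall i j k : 'I_n, i = 1%N :> nat -> j = 0%N :> nat -> k = 2%N :> nat ->
      c i j k = 1) /\
  (* c_{1i}^{i+1} = 0 for 2 <= i <= n-1 *)
  (forall j i k : 'I_n, j = 0%N :> nat -> (1 <= i)%N -> k = i.+1 :> nat ->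
      c j i k = 0).

Definition in_Ann (n : nat) (c : strconst n) (a : 'rV[CC]_n) : Prop :=
  forall u : 'rV[CC]_n, amul c a u = 0 /\ amul c u a = 0.

Definition is_aut (n : nat) (c : strconst n) (A : 'M[CC]_n) : Prop :=
  A \in unitmx /\
  forall u v : 'rV[CC]_n, amul c (u *m A) (v *m A) = amul c u v *m A.

(* Main.v *)
Require Import Defs.
From HB Require Import structures.
From mathcomp Require Import all_boot all_order all_algebra.
From mathcomp Require Import reals Rstruct complex.
From mathcomp Require Import zify ring.
Import GRing.Theory.
Set Implicit Arguments. Unset Strict Implicit.
Local Open Scope ring_scope.


Lemma sum2_one n (F : 'I_n -> 'I_n -> CC) i0 j0 :
  (forall i j, (i != i0) || (j != j0) -> F i j = 0) ->
  \sum_i \sum_j F i j = F i0 j0.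
Proof.
move=> H; rewrite (bigD1 i0) //= [X in _ + X]big1 => [|i Hi].
  rewrite addr0 (bigD1 j0) //= big1 ?addr0 // => j Hj; apply: H; by rewrite Hj orbT.
by apply: big1 => j _; apply: H; rewrite Hi.
Qed.

Lemma sum_one n (F : 'I_n -> CC) i0 :
  (forall i, i != i0 -> F i = 0) -> \sum_i F i = F i0.
Proof. by move=> H; rewrite (bigD1 i0) //= big1 ?addr0. Qed.

Lemma evE n k (j : 'I_n) : ev n k 0 j = (j == k :> nat)%:R.
Proof. by rewrite mxE. Qed.

Lemma ev_ne n k (j : 'I_n) : (j != k :> nat) -> ev n k 0 j = 0.
Proof. by rewrite evE => /negbTE ->. Qed.

Lemma rowE n (A : 'M[CC]_n) (i j : 'I_n) : (ev n i *m A) 0 j = A i j.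
Proof.
rewrite mxE (sum_one (i0:=i)) => [|l Hl]; first by rewrite evE eqxx mul1r.
by rewrite ev_ne ?mul0r.
Qed.

Definition inV n (p : nat) (u : 'rV[CC]_n) := forall i : 'I_n, (i < p)%N -> u 0 i = 0.

Lemma amul_V n (c : strconst n) p u v : in_Rn c -> inV p u -> inV p v -> inV p.+1 (amul c u v).
Proof.
move=> [H1 _] Hu Hv k Hk; rewrite mxE; apply: big1 => i _; apply: big1 => j _.
case: (ltnP i p) => hi; first by rewrite Hu // !mul0r.
case: (ltnP j p) => hj; first by rewrite (Hv j hj) mulr0 mul0r.
rewrite H1 ?mulr0 //; lia.
Qed.

Lemma amul_ev n (c : strconst n) (i j k : 'I_n) : amul c (ev n i) (ev n j) 0 k = c i j k.
Proof.
rewrite mxE (sum2_one (i0:=i) (j0:=j)) => [|a b]; first by rewrite !evE !eqxx !mul1r.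
by case/orP => H; [rewrite (ev_ne H) !mul0r | rewrite (ev_ne H) mulr0 mul0r].
Qed.

Lemma evsq n (c : strconst n) m : in_Rn c -> (m.+1 < n)%N -> amul c (ev n m) (ev n m) = ev n m.+1.
Proof.
move=> [_ [H2 _]] hm; have hm' : (m < n)%N by lia.
apply/rowP => k; rewrite (amul_ev c (Ordinal hm') (Ordinal hm')) H2 //= evE //.
Qed.

Lemma amulDl n (c : strconst n) u v w : amul c (u + v) w = amul c u w + amul c v w.
Proof.
apply/rowP => k; rewrite !mxE -big_split; apply: eq_bigr => i _.
rewrite -big_split; apply: eq_bigr => j _; by rewrite !mxE !mulrDl.
Qed.
Lemma amulDr n (c : strconst n) u v w : amul c w (u + v) = amul c w u + amul c w v.
Proof.
apply/rowP => k; rewrite !mxE -big_split; apply: eq_bigr => i _.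
rewrite -big_split; apply: eq_bigr => j _; by rewrite !mxE mulrDr mulrDl.
Qed.
Lemma amulZl n (c : strconst n) t u w : amul c (t *: u) w = t *: amul c u w.
Proof.
apply/rowP => k; rewrite !mxE mulr_sumr; apply: eq_bigr => i _.
rewrite mulr_sumr; apply: eq_bigr => j _; rewrite !mxE; ring.
Qed.
Lemma amulZr n (c : strconst n) t u w : amul c w (t *: u) = t *: amul c w u.
Proof.
apply/rowP => k; rewrite !mxE mulr_sumr; apply: eq_bigr => i _.
rewrite mulr_sumr; apply: eq_bigr => j _; rewrite !mxE; ring.
Qed.

Lemma ann_ev n (c : strconst n) u : in_Rn c ->
  amul c (ev n n.-1) u = 0 /\ amul c u (ev n n.-1) = 0.
Proof.
move=> [H1 _]; split; apply/rowP => k; rewrite !mxE; apply: big1 => i _; apply: big1 => j _.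
  case: (eqVneq (i : nat) n.-1) => hi; last by rewrite ev_ne // !mul0r.
  rewrite H1 ?mulr0 //; have := ltn_ord k; lia.
case: (eqVneq (j : nat) n.-1) => hj; last by rewrite (ev_ne hj) mulr0 mul0r.
rewrite H1 ?mulr0 //; have := ltn_ord k; lia.
Qed.

Lemma absorb n (c : strconst n) u v s t : in_Rn c ->
  amul c (u + s *: ev n n.-1) (v + t *: ev n n.-1) = amul c u v.
Proof.
move=> Hc; rewrite amulDl !amulDr !amulZl !amulZr.
rewrite !(proj1 (ann_ev _ Hc)) !(proj2 (ann_ev _ Hc)) !scaler0 !addr0 //.
Qed.


Lemma ann_iff n (hn : (3 <= n)%N) (c : strconst n) : in_Rn c ->
  forall a : 'rV[CC]_n, in_Ann c a <-> exists t : CC, a = t *: ev n n.-1.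
Proof.
move=> Hc a; split; last first.
  move=> [t ->] u; rewrite amulZl amulZr (proj1 (ann_ev _ Hc)) (proj2 (ann_ev _ Hc)).
  by rewrite !scaler0.
move=> Ha.
have [H1 [H2 [H3 H4]]] := Hc.
have key : forall m, (m <= n.-1)%N -> forall i : 'I_n, (i < m)%N -> a 0 i = 0.
  elim=> [|m IH] hm i hi; first by [].
  have hm1 : (m.+1 < n)%N by lia.
  have hm0 : (m < n)%N by lia.
  case: (ltnP i m) => him; first by apply: IH => //; lia.
  have -> : i = Ordinal hm0 by apply: val_inj => /=; lia.
  have := f_equal (fun w : 'rV[CC]_n => w 0 (Ordinal hm1)) (proj1 (Ha (ev n m))).
  rewrite mxE (sum2_one (i0:=Ordinal hm0) (j0:=Ordinal hm0)) => [|i' j'].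
    by rewrite evE eqxx H2 //= eqxx !mulr1 mxE.
  case: (eqVneq (j' : nat) m) => hj; last by move=> _; rewrite ev_ne // mulr0 mul0r.
  have -> : j' = Ordinal hm0 by apply: val_inj. rewrite eqxx orbF => hi'.
  case: (ltnP i' m) => hi2; first by rewrite IH ?mul0r //; lia.
  rewrite H1 ?mulr0 //=; have : (i' : nat) != m.
    by apply: contra hi' => /eqP h; apply/eqP/val_inj.
  lia.
have hn1 : (n.-1 < n)%N by lia.
exists (a 0 (Ordinal hn1)); apply/rowP => j; rewrite !mxE.
case: (eqVneq (j : nat) n.-1) => hj.
  by rewrite mulr1; congr (a 0 _); apply: val_inj.
rewrite mulr0 (key n.-1) //; have := ltn_ord j; lia.
Qed.


Definition Mx n (x : CC) : 'M[CC]_n := 1%:M + x *: ((ev n 0)^T *m ev n n.-1).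
Arguments Mx : clear implicits.

Lemma MxE n (x : CC) (i j : 'I_n) :
  Mx n x i j = (i == j)%:R + x * ((i == 0 :> nat)%:R * (j == n.-1 :> nat)%:R).
Proof.
rewrite /Mx !mxE big_ord1 !mxE //.
Qed.

Lemma mulMx n (h : (0 < n)%N) (x : CC) (u : 'rV[CC]_n) :
  u *m Mx n x = u + (x * u 0 (Ordinal h)) *: ev n n.-1.
Proof.
apply/rowP => j; rewrite !mxE.
under eq_bigr => i _ do rewrite MxE mulrDr.
rewrite big_split /= (sum_one (i0:=j)) => [|i Hi]; last by rewrite (negbTE Hi) mulr0.
rewrite eqxx mulr1 (sum_one (i0:=Ordinal h)) => [|i Hi]; last first.
  rewrite (_ : (i == 0 :> nat) = false) ?mul0r ?mulr0 //.
  by apply/negbTE; apply: contra Hi => /eqP e; apply/eqP/val_inj.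
rewrite /= mul1r; congr (_ + _). ring.
Qed.

Lemma aut_Mx n (hn : (3 <= n)%N) (c : strconst n) (Hc : in_Rn c) (x : CC) :
  is_aut c (Mx n x).
Proof.
have h0 : (0 < n)%N by lia.
have e0 : ev n n.-1 0 (Ordinal h0) = 0 by rewrite ev_ne //=; lia.
have inv : forall u : 'rV[CC]_n, u *m Mx n x *m Mx n (-x) = u.
  move=> u; rewrite !mulMx.
  have -> : (u + (x * u 0 (Ordinal h0)) *: ev n n.-1) 0 (Ordinal h0) = u 0 (Ordinal h0).
    rewrite !mxE /=; have -> : (0 == n.-1)%N = false by lia. by rewrite mulr0 addr0.
  by rewrite -addrA -scalerDl mulNr addrN scale0r addr0.
split.
  apply: (proj1 (mulmx1_unit (B:=Mx n (-x)) _)).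
  apply/matrixP => i j; by rewrite -rowE -[RHS]rowE mulmx1 mulmxA inv.
move=> u v; rewrite !mulMx absorb //.
have -> : amul c u v 0 (Ordinal h0) = 0.
  case: Hc => H1 _; rewrite mxE; apply: big1 => i _; apply: big1 => j _.
  by rewrite H1 ?mulr0.
by rewrite mulr0 scale0r addr0.
Qed.


Lemma sq_coord n (c : strconst n) (Hc : in_Rn c) (u : 'rV[CC]_n) (i k : 'I_n) :
  k = i.+1 :> nat -> inV i u -> amul c u u 0 k = u 0 i ^+ 2.
Proof.
case: Hc => H1 [H2 _] hk Hu.
rewrite mxE (sum2_one (i0:=i) (j0:=i)) => [|i' j' Hij].
  by rewrite H2 -?hk ?ltn_ord // hk eqxx mulr1 expr2.
case: (ltnP i' i) => h1; first by rewrite Hu // !mul0r.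
case: (ltnP j' i) => h2; first by rewrite (Hu j') // mulr0 mul0r.
rewrite H1 ?mulr0 //.
case/orP: Hij => /eqP hne.
  have : (i' : nat) <> i by move=> e; apply: hne; apply: val_inj.
  lia.
have : (j' : nat) <> i by move=> e; apply: hne; apply: val_inj.
lia.
Qed.

Lemma aut_form n (hn : (3 <= n)%N) (c : strconst n) (Hc : in_Rn c) (A : 'M[CC]_n) :
  is_aut c A -> exists x, A = Mx n x.
Proof.
move=> [Hu Hm].
have [H1 [H2 [H3 H4]]] := Hc.
have h0 : (0 < n)%N by lia.
have h1 : (1 < n)%N by lia.
have h2 : (2 < n)%N by lia.
pose o0 := Ordinal h0. pose o1 := Ordinal h1. pose o2 := Ordinal h2.
have Hphi : forall i j : 'I_n,
    amul c (ev n i *m A) (ev n j *m A) = amul c (ev n i) (ev n j) *m A.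
  by move=> i j; apply: Hm.
have TV : forall m, (m < n)%N -> inV m (ev n m *m A).
  elim=> [|m IH] hm; first by move=> i.
  rewrite -(evsq Hc hm) -Hm; apply: amul_V => //; apply: IH; lia.
have T : forall i k : 'I_n, (k < i)%N -> A i k = 0.
  by move=> i k hk; rewrite -rowE; apply: TV.
have D : forall i j : 'I_n, j = i.+1 :> nat -> A j j = A i i ^+ 2.
  move=> i j hj; rewrite -!rowE.
  have hi : ((i : nat).+1 < n)%N by rewrite -hj.
  have -> : ev n j = amul c (ev n i) (ev n i) by rewrite evsq // hj.
  by rewrite -Hm (sq_coord Hc hj) //; apply: TV.
have a0 : A o0 o0 != 0.
  apply/negP => /eqP ha.
  have := f_equal (fun w : 'rV_n => w 0 o0) (mulmxKV Hu (ev n 0)).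
  rewrite /= [RHS]evE /= mxE big1 => [|i _].
    by move/eqP; rewrite eq_sym oner_eq0.
  case: (posnP i) => hi.
    have -> : i = o0 by apply: val_inj.
    by rewrite ha mulr0.
  by rewrite T ?mulr0.
have ND : forall i : 'I_n, A i i != 0.
  move=> [m hm]; elim: m hm => [|m IH] hm.
    by have -> : Ordinal hm = o0 by apply: val_inj.
  have hm' : (m < n)%N by lia.
  rewrite (D (Ordinal hm')) //; apply: expf_neq0; apply: IH.
have Q : forall m, (m.+1 < n)%N -> forall j : 'I_n, (0 < j)%N -> (j <= m)%N -> A o0 j = 0.
  elim=> [|m IH] hm j hj0 hjm; first by lia.
  case: (ltnP j m.+1) => hjm'; first by apply: IH => //; lia.
  have hM : (m.+1 < n)%N by lia.
  pose oM := Ordinal hM. pose oM1 := Ordinal hm.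
  have E := f_equal (fun w : 'rV_n => w 0 oM1) (Hphi o0 oM).
  move: E; rewrite /= mxE (sum2_one (i0:=oM) (j0:=oM)) => [|i' j' Hij]; last first.
    case: (ltngtP j' m.+1) => hj'.
    - by rewrite (rowE A oM j') T ?mulr0 ?mul0r.
    - by rewrite H1 ?mulr0 //=; lia.
    have ej : j' = oM by apply: val_inj.
    have hi' : i' != oM by move: Hij; rewrite ej eqxx orbF.
    case: (ltngtP i' m.+1) => hi2.
    - case: (posnP i') => hi3.
        by rewrite (H4 i' j' oM1) ?mulr0 //= hj'.
      by rewrite (rowE A o0 i') IH ?mul0r //; lia.
    - by rewrite H1 ?mulr0 //=; lia.
    - by case/eqP: hi'; apply: val_inj.
  rewrite [RHS]mxE big1 => [|i _]; last first.
    rewrite (amul_ev c o0 oM).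
    case: (leqP (i : nat) m.+2) => hi; last by rewrite T ?mulr0.
    case: (ltngtP (i : nat) m.+2) => hi2.
    - by rewrite H1 ?mul0r //=; lia.
    - lia.
    - by rewrite (H4 o0 oM i) ?mul0r.
  rewrite (rowE A o0 oM) (rowE A oM oM) H2 //= eqxx mulr1 => /eqP; rewrite mulf_eq0 (negbTE (ND oM)) orbF.
  move=> /eqP e; rewrite -e; congr (A _ _); apply: val_inj => /=; lia.
have b0 : A o0 o1 = 0 by apply: (Q 1%N).
have a1 : A o0 o0 = 1.
  have E := f_equal (fun w : 'rV_n => w 0 o2) (Hphi o1 o0).
  move: E; rewrite /= mxE (sum2_one (i0:=o1) (j0:=o0)) => [|i' j' Hij]; last first.
    case: (ltngtP i' 1%N) => hi.
    - by rewrite (rowE A o1 i') T ?mul0r.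
    - by rewrite H1 ?mulr0 //=; lia.
    have ei : i' = o1 by apply: val_inj.
    have hj : j' != o0 by move: Hij; rewrite ei eqxx.
    case: (ltngtP j' 1%N) => hj2.
    - by case/eqP: hj; apply: val_inj => /=; lia.
    - by rewrite H1 ?mulr0 //=; lia.
    - have -> : j' = o1 by apply: val_inj.
      by rewrite (rowE A o0 o1) b0 mulr0 mul0r.
  rewrite [RHS]mxE (sum_one (i0:=o2)) => [|i Hi]; last first.
    rewrite (amul_ev c o1 o0); case: (ltngtP (i : nat) 2%N) => hi.
    - by rewrite H1 ?mul0r //=; lia.
    - by rewrite T ?mulr0.
    - by case/eqP: Hi; apply: val_inj.
  rewrite (amul_ev c o1 o0) (rowE A o1 o1) (rowE A o0 o0) H3 // mulr1 mul1r (D o1 o2) // (D o0 o1) // => E.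
  set a := A o0 o0 in E *.
  have F : a ^+ 3 * (a - 1) = (a ^+ 2) ^+ 2 - a ^+ 2 * a by ring.
  rewrite -E subrr in F; move/eqP: F; rewrite mulf_eq0 expf_eq0 (negbTE a0) andbF /=.
  by rewrite subr_eq0 => /eqP.
have hL : (n.-1 < n)%N by lia.
pose oL := Ordinal hL.
exists (A o0 oL).
have R0 : ev n 0 *m A = ev n 0 + A o0 oL *: ev n n.-1.
  apply/rowP => j; rewrite (rowE A o0 j) !mxE.
  case: (posnP j) => hj.
    have -> : j = o0 by apply: val_inj.
    rewrite a1 /=; have -> : (0 == n.-1)%N = false by lia.
    by rewrite mulr0 addr0.
  have -> : (false%:R : CC) = 0 by [].
  case: (eqVneq (j : nat) n.-1) => hjL.
    by rewrite add0r mulr1; congr (A _ _); apply: val_inj.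
  rewrite mulr0 addr0; apply: (Q n.-2) => //; have := ltn_ord j; lia.
have RS : forall m, (m.+1 < n)%N -> ev n m.+1 *m A = ev n m.+1.
  elim=> [|m IH] hm.
    by rewrite -(evsq Hc hm) -Hm R0 absorb // evsq.
  rewrite -(evsq Hc hm) -Hm IH ?evsq //; lia.
apply/matrixP => i j; rewrite -rowE MxE.
case: (posnP i) => hi.
  have -> : i = o0 by apply: val_inj.
  rewrite R0 !mxE /=.
  by rewrite mul1r eq_sym.
have := RS i.-1; rewrite prednK // => ->; last exact: ltn_ord.
have -> : (false%:R : CC) = 0 by []. by rewrite evE mul0r mulr0 addr0 eq_sym.
Qed.

Theorem mainTheorem11 (n : nat) (hn : (3 <= n)%N) (c : strconst n) :
  in_Rn c ->
  (forall a : 'rV[CC]_n, in_Ann c a <-> exists t : CC, a = t *: ev n n.-1) /\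
  (forall A : 'M[CC]_n, is_aut c A <->
     exists x : CC, A = 1%:M + x *: ((ev n 0)^T *m ev n n.-1)).
Proof.
move=> Hc; split; first exact: ann_iff.
move=> A; split; first exact: aut_form.
by move=> [x ->]; apply: (aut_Mx hn Hc).
Qed.
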